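(* Let $\rho>0$ and assume $\Gamma(0)<\Gamma(1)$ and $1+\rho\ln\mu(0)>0$. Then for every $\rho$-admissible scaling $n\mapsto L_n$, \[ \lim_{n\to\infty}\mathbb{E}[I^{(0)}_n(L_n)]=\begin{cases}\infty&\text{if } 1+\rho\ln\Gamma(0)<0,\\ 0&\text{if } 1+\rho\ln\Gamma(0)>0.\end{cases} \]
   Context: Homogeneous binary MAG model. Fix $\mu(0),\mu(1)\in(0,1)$ with $\mu(0)+\mu(1)=1$, and a symmetric $2\times2$ matrix $(q(a,b))$ with $q(0,1)=q(1,0)$ and $0<q(a,b)<1$. On a probability space, $\{A,A_\ell(u):\ell,u\ge1\}$ are i.i.d. $\{0,1\}$-valued with $\mathbb{P}[A=1]=\mu(1)$, independent of i.i.d. uniform$(0,1)$ variables $\{U(u,v):1\le u<v\}$, $U(v,u)=U(u,v)$. With $\mathbf A_L(u)=(A_1(u),\dots,A_L(u))$ and $Q_L(\mathbf a,\mathbf b)=\prod_{\ell=1}^Lq(a_\ell,b_\ell)$, the graph $\mathbb{M}(n;L)$ on $\{1,\dots,n\}$ has an edge between distinct $u,v$ iff $U(u,v)\le Q_L(\mathbf A_L(u),\mathbf A_L(v))$. Let $S_L(u)=A_1(u)+\dots+A_L(u)$. For $\ell\in\{0,\dots,L\}$, $I^{(\ell)}_n(L)$ denotes the number of nodes $u\in\{1,\dots,n\}$ that are isolated in $\mathbb{M}(n;L)$ and satisfy $S_L(u)=\ell$. $\Gamma(a)=\mathbb{E}[q(a,A)]$. A scaling $n\mapsto L_n$ of positive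 integers is $\rho$-admissible if $L_n\sim\rho\ln n$. *)

(* Defs.v *)
From HB Require Import structures.
From mathcomp Require Import all_boot all_order all_algebra.
From mathcomp Require Import all_classical all_reals all_analysis.
Set Implicit Arguments. Unset Strict Implicit. Unset Printing Implicit Defensive.
Import Order.TTheory GRing.Theory Num.Theory.
Local Open Scope classical_set_scope.
Local Open Scope ring_scope.

(* Attribute value 0 is [false], attribute value 1 is [true]. *)

Section MAG.
Variable R : realType.

Definition Gamma (mu : bool -> R) (q : bool -> bool -> R) (a : bool) : R :=
  q a false * mu false + q a true * mu true.

Variables (n L : nat).

(* An outcome of the attributes A_l(u), u in {1..n}, l in {1..L}. *)
Definition attr := {ffun 'I_n -> {ffun 'I_L -> bool}}.
(* An outcome of the edge indicators: e u v is meaningful only for u < v. *)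
Definition edges := {ffun 'I_n -> {ffun 'I_n -> bool}}.

Definition QL (q : bool -> bool -> R) (a b : {ffun 'I_L -> bool}) : R :=
  \prod_(l < L) q (a l) (b l).

Definition SL (a : {ffun 'I_L -> bool}) : nat := \sum_(l < L) (a l : nat).

Definition P_attr (mu : bool -> R) (A : attr) : R :=
  \prod_(u < n) \prod_(l < L) mu (A u l).

(* Conditional probability of an edge outcome given the attributes:
   for u < v the edge {u,v} is present iff U(u,v) <= Q_L(A(u),A(v)), an
   event of conditional probability Q_L(A(u),A(v)), independently over
   pairs; entries with ~~ (u < v) are forced to be false. *)
Definition P_edges (q : bool -> bool -> R) (A : attr) (e : edges) : R :=
  \prod_(u < n) \prod_(v < n)
    (if (u < v)%N then (if e u v then QL q (A u) (A v) else 1 - QL q (A u) (A v))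
     else (if e u v then 0 else 1)).

Definition adj (e : edges) (u v : 'I_n) : bool :=
  if (u < v)%N then e u v else if (v < u)%N then e v u else false.

Definition isolated (e : edges) (u : 'I_n) : bool := [forall v, ~~ adj e u v].

Definition I_count (l : nat) (A : attr) (e : edges) : nat :=
  #|[set u : 'I_n | isolated e u && (SL (A u) == l)]|.

Definition E_I (mu : bool -> R) (q : bool -> bool -> R) (l : nat) : R :=
  \sum_(A : attr) \sum_(e : edges) P_attr mu A * P_edges q A e * (I_count l A e)%:R.

End MAG.

Definition admissible (R : realType) (rho : R) (Ls : nat -> nat) : Prop :=
  (forall k, (0 < Ls k)%N) /\
  ((fun k => (Ls k)%:R / (rho * ln (k%:R : R))) @ \oo --> (1 : R^o)).

(* Main.v *)
Require Import Defs.
From HB Require Import structures.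
From mathcomp Require Import all_boot all_order all_algebra.
From mathcomp Require Import all_classical all_reals all_analysis.
From mathcomp Require Import ring lra.
Import numFieldNormedType.Exports.
Import Order.TTheory GRing.Theory Num.Theory.
Local Open Scope classical_set_scope.
Local Open Scope ring_scope.
Section Part1.
Variable R : realType.

Lemma prod_nat_bool (I : finType) (P : I -> bool) :
  ([forall i, P i])%:R = \prod_i (P i)%:R :> R.
Proof.
case: (boolP [forall i, P i]) => [/forallP H|/forallPn [i Hi]].
  by rewrite big1 // => i _; rewrite H.
by rewrite (bigD1 i) //= (negbTE Hi) mul0r.
Qed.

Lemma prod_split_pair n (f : 'I_n -> 'I_n -> R) (u0 : 'I_n) :
  \prod_(u < n) \prod_(v < n)
     (if (u < v)%N && ((u == u0) || (v == u0)) then f u v else 1)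
  = \prod_(v < n | v != u0) (if (u0 < v)%N then f u0 v else f v u0).
Proof.
transitivity (\prod_(u < n) \prod_(v < n)
   ((if u == u0 then (if (u0 < v)%N then f u0 v else 1) else 1) *
    (if v == u0 then (if (u < u0)%N then f u u0 else 1) else 1))).
  apply: eq_bigr => u _; apply: eq_bigr => v _.
  case: (eqVneq u u0) => [->|Hu]; case: (eqVneq v u0) => [->|Hv] /=;
    rewrite ?ltnn ?mulr1 ?mul1r ?andbT ?andbF //.
rewrite (eq_bigr (fun u => \prod_(v < n) (if u == u0 then (if (u0 < v)%N then f u0 v else 1) else 1) *
   \prod_(v < n) (if v == u0 then (if (u < u0)%N then f u u0 else 1) else 1)));
  last by move=> u _; rewrite big_split.
rewrite big_split /=.
have -> : \prod_(u < n) \prod_(v < n) (if u == u0 then (if (u0 < v)%N then f u0 v else 1) else 1)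
   = \prod_(v < n) (if (u0 < v)%N then f u0 v else 1).
  rewrite (bigD1 u0) //= eqxx [X in _ * X]big1 ?mulr1 //.
  by move=> u Hu; rewrite (negbTE Hu) big1.
have -> : \prod_(u < n) \prod_(v < n) (if v == u0 then (if (u < u0)%N then f u u0 else 1) else 1)
   = \prod_(v < n) (if (v < u0)%N then f v u0 else 1).
  rewrite exchange_big /= (bigD1 u0) //= eqxx [X in _ * X]big1 ?mulr1 //.
  by move=> v Hv; rewrite (negbTE Hv) big1.
rewrite -big_split /= [RHS]big_mkcond /=.
apply: eq_bigr => v _.
case: (ltngtP u0 v) => H.
- have Hne : v != u0 by apply/negP => /eqP E; move: H; rewrite E ltnn.
  by rewrite Hne mulr1.
- have Hne : v != u0 by apply/negP => /eqP E; move: H; rewrite E ltnn.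
  by rewrite Hne mul1r.
- by move: H => /val_inj ->; rewrite eqxx mulr1.
Qed.

End Part1.
Section Part2.
Variable R : realType.
Variables (n L : nat) (q : bool -> bool -> R).
Hypothesis qsym : forall a b, q a b = q b a.

Lemma QL_sym (a b : {ffun 'I_L -> bool}) : QL q a b = QL q b a :> R.
Proof. by rewrite /QL; apply: eq_bigr => l _; rewrite qsym. Qed.

Lemma sum_edges_iso (A : attr n L) (u0 : 'I_n) :
  \sum_(e : edges n) P_edges q A e * (Defs.isolated e u0)%:R
  = \prod_(v < n | v != u0) (1 - QL q (A u0) (A v)).
Proof.
pose g (u v : 'I_n) (b : bool) : R :=
  if (u < v)%N then (if b then QL q (A u) (A v) else 1 - QL q (A u) (A v))
     else (if b then 0 else 1).
pose h (u v : 'I_n) (b : bool) : R :=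
  if (u < v)%N && ((u == u0) || (v == u0)) then (~~ b)%:R else 1.
have Hiso : forall e : edges n, (Defs.isolated e u0)%:R = \prod_(u < n) \prod_(v < n) h u v (e u v).
  move=> e; rewrite /h (@prod_split_pair R n) /Defs.isolated prod_nat_bool [RHS]big_mkcond /=.
  apply: eq_bigr => v _; rewrite /adj.
  case: (ltngtP u0 v) => H.
  - by have -> : v != u0 by apply/negP => /eqP E; move: H; rewrite E ltnn.
  - by have -> : v != u0 by apply/negP => /eqP E; move: H; rewrite E ltnn.
  - by move: H => /val_inj ->; rewrite eqxx.
have -> : \sum_(e : edges n) P_edges q A e * (Defs.isolated e u0)%:R =
   \sum_(e : edges n) \prod_(u < n) \prod_(v < n) (g u v (e u v) * h u v (e u v)).
  apply: eq_bigr => e _; rewrite Hiso /P_edges -big_split /=.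
  by apply: eq_bigr => u _; rewrite -big_split.
rewrite -(bigA_distr_bigA (fun (u : 'I_n) (r : {ffun 'I_n -> bool}) =>
   \prod_(v < n) (g u v (r v) * h u v (r v)))) /=.
transitivity (\prod_(u < n) \prod_(v < n) (g u v true * h u v true + g u v false * h u v false)).
  apply: eq_bigr => u _.
  rewrite -(bigA_distr_bigA (fun (v : 'I_n) (b : bool) => g u v b * h u v b)) /=.
  by apply: eq_bigr => v _; rewrite big_bool.
pose f (u v : 'I_n) : R := 1 - QL q (A u) (A v).
rewrite (eq_bigr (fun v : 'I_n => if (u0 < v)%N then f u0 v else f v u0)); last first.
  by move=> v _; rewrite /f; case: ifP => // _; rewrite QL_sym.
rewrite -(@prod_split_pair R n f u0).
apply: eq_bigr => u _; apply: eq_bigr => v _.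
rewrite /g /h /f; case: (u < v)%N; case: ((u == u0) || (v == u0)) => /=;
  rewrite ?mulr1 ?mulr0 ?mul0r ?add0r ?addr0 //.
by rewrite addrC subrK.
Qed.

End Part2.
Section Part3.
Variable R : realType.
Variables (n L : nat) (q : bool -> bool -> R) (mu : bool -> R).
Hypothesis qsym : forall a b, q a b = q b a.
Hypothesis mu1 : mu false + mu true = 1.

Let z : {ffun 'I_L -> bool} := [ffun => false].

Lemma SL0 (a : {ffun 'I_L -> bool}) : (SL a == 0%N) = (a == z).
Proof.
case: (boolP (a == z)) => [/eqP ->|H].
  by apply/eqP; rewrite /SL big1 // => l _; rewrite /z ffunE.
have [l Hl] : exists l, a l.
  apply/existsP; apply/negP => /existsP Hn; move/negP: H; apply.
  apply/eqP/ffunP => l; rewrite /z ffunE; apply/negbTE/negP => Hl; apply: Hn; by exists l.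
by rewrite /SL (bigD1 l) //= Hl.
Qed.

Lemma sum_attr (u0 : 'I_n) :
  \sum_(A : attr n L) P_attr mu A * (SL (A u0) == 0%N)%:R *
      \prod_(v < n | v != u0) (1 - QL q (A u0) (A v))
  = mu false ^+ L * (1 - Gamma mu q false ^+ L) ^+ n.-1.
Proof.
pose F (u : 'I_n) (a : {ffun 'I_L -> bool}) : R :=
  (\prod_(l < L) mu (a l)) * (if u == u0 then (a == z)%:R else 1 - QL q z a).
transitivity (\sum_(A : attr n L) \prod_(u < n) F u (A u)).
  apply: eq_bigr => A _.
  rewrite /F big_split /= /P_attr -mulrA; congr (_ * _).
  rewrite [RHS](bigD1 u0) //= eqxx SL0.
  rewrite [in RHS](eq_bigr (fun u => 1 - QL q z (A u))); last first.
    by move=> u Hu; rewrite (negbTE Hu).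
  by case: (eqVneq (A u0) z) => [->|_]; rewrite ?mul0r ?mul1r.
rewrite -(bigA_distr_bigA (fun (u : 'I_n) (a : {ffun 'I_L -> bool}) => F u a)) /=.
rewrite (bigD1 u0) //=.
have Hmu : \sum_(a : {ffun 'I_L -> bool}) F u0 a = mu false ^+ L.
  rewrite /F /= (bigD1 z) //= !eqxx mulr1 [X in _ + X]big1 ?addr0; last first.
    by move=> a Ha; rewrite (negbTE Ha) mulr0.
  by rewrite (eq_bigr (fun _ => mu false)) ?prodr_const ?card_ord // => l _; rewrite /z ffunE.
have Hg : forall u, u != u0 -> \sum_(a : {ffun 'I_L -> bool}) F u a = 1 - Gamma mu q false ^+ L.
  move=> u Hu; rewrite /F (negbTE Hu).
  rewrite (eq_bigr (fun a : {ffun 'I_L -> bool} => \prod_(l < L) mu (a l) -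
        \prod_(l < L) (mu (a l) * q false (a l)))); last first.
    move=> a _; rewrite mulrBr mulr1 big_split /= /QL; congr (_ - _ * _).
    by apply: eq_bigr => l _; rewrite /z ffunE.
  rewrite sumrB.
  rewrite -(bigA_distr_bigA (fun (l : 'I_L) (b : bool) => mu b)) /=.
  rewrite -(bigA_distr_bigA (fun (l : 'I_L) (b : bool) => mu b * q false b)) /=.
  rewrite [X in X - _](eq_bigr (fun _ => 1)); last by move=> l _; rewrite big_bool /= addrC.
  rewrite [X in _ - X](eq_bigr (fun _ => Gamma mu q false)); last first.
    by move=> l _; rewrite big_bool /= /Gamma addrC !(mulrC (mu _)).
  by rewrite !prodr_const card_ord expr1n.
rewrite Hmu; congr (_ * _).
rewrite (eq_bigr (fun _ => 1 - Gamma mu q false ^+ L)); last by move=> u Hu; rewrite Hg.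
by rewrite prodr_const cardC1 card_ord.
Qed.

Lemma E_I_formula :
  E_I n L mu q 0 = n%:R * (mu false ^+ L * (1 - Gamma mu q false ^+ L) ^+ n.-1).
Proof.
rewrite /E_I.
have Hc : forall (A : attr n L) (e : edges n), (I_count 0 A e)%:R =
    \sum_(u < n) (Defs.isolated e u)%:R * (SL (A u) == 0%N)%:R :> R.
  move=> A e; rewrite /I_count -sum1_card natr_sum big_mkcond /=.
  apply: eq_bigr => u _.
  have -> : (u \in [set u | Defs.isolated e u && (SL (A u) == 0%N)]) =
     (Defs.isolated e u && (SL (A u) == 0%N)).
    by apply/idP/idP => [/set_mem|H]; [|apply/mem_set].
  by case: (Defs.isolated e u); case: (SL (A u) == 0%N); rewrite /= ?mul1r ?mul0r.
transitivity (\sum_(A : attr n L) \sum_(u < n) P_attr mu A * (SL (A u) == 0%N)%:R *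
    \sum_(e : edges n) P_edges q A e * (Defs.isolated e u)%:R).
  apply: eq_bigr => A _.
  rewrite (eq_bigr (fun e => \sum_(u < n) P_attr mu A * (SL (A u) == 0%N)%:R *
       (P_edges q A e * (Defs.isolated e u)%:R))); last first.
    move=> e _; rewrite Hc mulr_sumr; apply: eq_bigr => u _.
    by ring.
  rewrite exchange_big /=; apply: eq_bigr => u _; by rewrite mulr_sumr.
rewrite exchange_big /=.
rewrite (eq_bigr (fun _ => mu false ^+ L * (1 - Gamma mu q false ^+ L) ^+ n.-1)).
  by rewrite sumr_const card_ord mulr_natl.
move=> u _; rewrite -(sum_attr u); apply: eq_bigr => A _.
by rewrite sum_edges_iso.
Qed.

End Part3.
Section Asym.
Variable R : realType.

Lemma key_exp (k L : nat) (rho x : R) : (1 < k)%N -> 0 < rho -> 0 < x ->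
  k%:R * x ^+ L = expR (ln (k%:R : R) * (1 + rho * (L%:R / (rho * ln (k%:R : R))) * ln x)).
Proof.
move=> hk hr hx.
have tpos : 0 < ln (k%:R : R) by apply: ln_gt0; rewrite ltr1n.
have Ek : expR (ln (k%:R : R)) = k%:R by rewrite lnK // posrE ltr0n; apply: ltnW.
have Ex : expR (L%:R * ln x) = x ^+ L by rewrite expRM_natl lnK.
rewrite -[in LHS]Ek -[in LHS]Ex -expRD; congr expR.
field.
by rewrite !gt_eqF.
Qed.

Lemma bernoulli (x : R) (m : nat) : 0 <= x <= 1 -> 1 - m%:R * x <= (1 - x) ^+ m.
Proof.
move=> /andP [h0 h1]; elim: m => [|m IH]; first by rewrite mul0r subr0 expr0.
rewrite exprS.
have h2 : 0 <= 1 - x by lra.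
have : (1 - x) * (1 - m%:R * x) <= (1 - x) * (1 - x) ^+ m by apply: ler_wpM2l.
have hm : 0 <= m%:R * x ^+ 2 :> R by apply: mulr_ge0; rewrite ?ler0n ?sqr_ge0.
rewrite -natr1; nra.
Qed.

Lemma pow_le_exp (x : R) (m : nat) : 0 <= x <= 1 -> (1 - x) ^+ m <= expR (- (m%:R * x)).
Proof.
move=> /andP [h0 h1].
rewrite -mulrN expRM_natl; apply: lerXn2r; rewrite ?nnegrE ?expR_ge0 //; first lra.
by have := expR_ge1Dx (- x); lra.
Qed.

Lemma ev_lnk (T : R) : \forall k \near \oo, T <= ln (k%:R : R).
Proof.
near=> k.
have H : expR T <= k%:R by near: k; apply: nbhs_infty_ger.
rewrite -(expRK T) ler_ln ?posrE ?expR_gt0 //; exact: lt_le_trans (expR_gt0 T) H.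
Unshelve. all: end_near.
Qed.

End Asym.
Lemma expR_inv (R : realType) (s : R) : expR s * expR (- s) = 1.
Proof. by rewrite -expRD subrr expR0. Qed.

Theorem proposition2 (R : realType) (mu : bool -> R) (q : bool -> bool -> R)
  (rho : R) (Ls : nat -> nat) :
  0 < mu false < 1 -> 0 < mu true < 1 -> mu false + mu true = 1 ->
  (forall a b, q a b = q b a) -> (forall a b, 0 < q a b < 1) ->
  0 < rho ->
  Gamma mu q false < Gamma mu q true ->
  0 < 1 + rho * ln (mu false) ->
  admissible rho Ls ->
  (1 + rho * ln (Gamma mu q false) < 0 ->
     (fun k => E_I k (Ls k) mu q 0) @ \oo --> +oo) /\
  (0 < 1 + rho * ln (Gamma mu q false) ->
     (fun k => E_I k (Ls k) mu q 0) @ \oo --> (0 : R^o)).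
Proof.
move=> /andP[m0p m0l] /andP[m1p m1l] mu1 qsym qb rhop _ Hmu [_ Hr].
have /andP[q00p q00l] := qb false false.
have /andP[q01p q01l] := qb false true.
set G := Gamma mu q false.
have Gp : 0 < G by rewrite /G /Gamma; nra.
have Gl : G < 1 by rewrite /G /Gamma; nra.
have EE : (fun k => E_I k (Ls k) mu q 0) =
   (fun k => k%:R * (mu false ^+ Ls k * (1 - G ^+ Ls k) ^+ k.-1)).
  by apply: funext => k; rewrite (E_I_formula _ _ _ _ _ qsym mu1).
rewrite EE.
set r := fun k : nat => (Ls k)%:R / (rho * ln (k%:R : R)).
have Hc : forall c, (fun k => 1 + rho * r k * c) @ \oo --> (1 + rho * 1 * c : R).
  move=> c.
  have h1 : (fun k => rho * r k * c) @ \oo --> (rho * 1 * c : R).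
    apply: cvgMr_tmp; apply: cvgMl_tmp; exact: Hr.
  have h3 : ((fun _ : nat => (1:R)) + (fun k => rho * r k * c)) @ \oo --> (1 + rho * 1 * c : R).
    by apply: cvgD => //; exact: cvg_cst.
  exact: h3.
have Xb : forall L : nat, 0 <= G ^+ L <= 1.
  by move=> L; rewrite exprn_ge0 ?exprn_ile1 ?ltW.
split.
- move=> Hneg; apply/cvgryPge => A.
  set c1 := 1 + rho * ln (mu false).
  set c2 := - (1 + rho * ln G).
  have c2p : 0 < c2 by rewrite /c2; lra.
  have H1 : \forall k \near \oo, c1 / 2 < 1 + rho * r k * ln (mu false).
    apply: (cvgr_gt _ (Hc (ln (mu false)))); rewrite mulr1 /c1; lra.
  have H2 : \forall k \near \oo, 1 + rho * r k * ln G < - c2 / 2.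
    apply: (cvgr_lt _ (Hc (ln G))); rewrite mulr1 /c2; lra.
  near=> k.
  have hk : (2 <= k)%N by near: k; apply: nbhs_infty_ge.
  have ht1 : 2 / c2 <= ln (k%:R : R) by near: k; apply: ev_lnk.
  have ht2 : (2 * (2 * A - 1)) / c1 <= ln (k%:R : R) by near: k; apply: ev_lnk.
  have h1 : c1 / 2 < 1 + rho * r k * ln (mu false) by near: k; exact: H1.
  have h2 : 1 + rho * r k * ln G < - c2 / 2 by near: k; exact: H2.
  set t := ln (k%:R : R) in ht1 ht2 h1 h2.
  have tp : 0 < t by apply: ln_gt0; rewrite ltr1n.
  have ht1' : 2 <= t * c2 by rewrite -ler_pdivrMr.
  have ht2' : 2 * (2 * A - 1) <= t * c1 by rewrite -ler_pdivrMr.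
  have hX : k%:R * G ^+ Ls k <= 1 / 2.
    rewrite (key_exp _ _ _ rho) // -/t -/(r k).
    set s := t * _.
    have hs : s <= -1 by rewrite /s; nra.
    have e1 : 2 <= expR (- s) by have := expR_ge1Dx (- s); lra.
    have := expR_inv _ s; have := expR_gt0 s; nra.
  have hM : 2 * A <= k%:R * mu false ^+ Ls k.
    rewrite (key_exp _ _ _ rho) // -/t -/(r k).
    set s := t * _.
    have hs : t * c1 / 2 <= s by rewrite /s; nra.
    have := expR_ge1Dx s; lra.
  have hP : 1 / 2 <= (1 - G ^+ Ls k) ^+ k.-1.
    apply: (le_trans _ (bernoulli _ _ k.-1 (Xb (Ls k)))).
    have hkk : (k.-1)%:R <= (k%:R : R) by rewrite ler_nat leq_pred.
    have := Xb (Ls k); move=> /andP[x0 x1].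
    have : (k.-1)%:R * G ^+ Ls k <= k%:R * G ^+ Ls k by apply: ler_wpM2r.
    lra.
  have hMp : 0 <= k%:R * mu false ^+ Ls k.
    by apply: mulr_ge0; [exact: ler0n | exact: exprn_ge0 (ltW m0p)].
  rewrite mulrA; nra.
- move=> Hpos; apply/cvgrPdist_lt => eps he.
  set c3 := 1 + rho * ln G.
  set c := c3 ^+ 2 / 32.
  have cp : 0 < c by rewrite /c divr_gt0 // exprn_gt0.
  have H3 : \forall k \near \oo, c3 / 2 < 1 + rho * r k * ln G.
    apply: (cvgr_gt _ (Hc (ln G))); rewrite mulr1 /c3; lra.
  near=> k.
  have hk : (2 <= k)%N by near: k; apply: nbhs_infty_ge.
  have ht1 : 2 / c <= ln (k%:R : R) by near: k; apply: ev_lnk.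
  have ht2 : 1 - ln eps <= ln (k%:R : R) by near: k; apply: ev_lnk.
  have h3 : c3 / 2 < 1 + rho * r k * ln G by near: k; exact: H3.
  set t := ln (k%:R : R) in ht1 ht2 h3.
  have tp : 0 < t by apply: ln_gt0; rewrite ltr1n.
  have ht1' : 2 <= t * c by rewrite -ler_pdivrMr.
  have kp : (0 : R) < k%:R by rewrite ltr0n; apply: leq_trans hk.
  have Ek : expR t = k%:R by rewrite /t lnK // posrE.
  have hY : 2 * c * t ^+ 2 <= k%:R * G ^+ Ls k.
    rewrite (key_exp _ _ _ rho) // -/t -/(r k).
    set s := t * _.
    have hs : t * c3 / 2 <= s.
      rewrite /s; have hy : 0 <= (1 + rho * r k * ln G) - c3 / 2 by lra.
      have := mulr_ge0 (ltW tp) hy; nra.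
    set w := t * c3 / 4.
    have w0 : 0 <= w by rewrite /w; apply: divr_ge0 => //; apply: mulr_ge0; [exact: ltW | exact: ltW].
    have ew : w <= expR w by have := expR_ge1Dx w; lra.
    have e2 : expR (t * c3 / 2) = expR w * expR w by rewrite -expRD /w; congr expR; field.
    have : expR (t * c3 / 2) <= expR s by rewrite ler_expR.
    have : 2 * c * t ^+ 2 = w * w by rewrite /c /w; field.
    have := expR_ge0 w; nra.
  have hXk := Xb (Ls k); move/andP: hXk => [x0 x1].
  have hk1 : k%:R / 2 <= (k.-1)%:R :> R.
    have hk0 : (0 < k)%N by apply: leq_trans hk.
    have : (k.-1)%:R = k%:R - 1 :> R by rewrite -[in RHS](prednK hk0) -natr1 addrK.
    have : (2 : R) <= k%:R by rewrite ler_nat.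
    lra.
  have hP := pow_le_exp _ _ k.-1 (Xb (Ls k)).
  have hP2 : expR (- ((k.-1)%:R * G ^+ Ls k)) <= expR (- (c * t ^+ 2)).
    rewrite ler_expR lerN2.
    have : k%:R / 2 * G ^+ Ls k <= (k.-1)%:R * G ^+ Ls k by apply: ler_wpM2r.
    lra.
  have hmL : mu false ^+ Ls k <= 1 by rewrite exprn_ile1 ?ltW.
  have hmL0 : 0 <= mu false ^+ Ls k by rewrite exprn_ge0 ?ltW.
  have hP0 : 0 <= (1 - G ^+ Ls k) ^+ k.-1 by rewrite exprn_ge0 // subr_ge0.
  have hE : k%:R * (mu false ^+ Ls k * (1 - G ^+ Ls k) ^+ k.-1) <= expR (t - c * t ^+ 2).
    rewrite expRD Ek.
    apply: ler_wpM2l; first exact: ltW.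
    have : mu false ^+ Ls k * (1 - G ^+ Ls k) ^+ k.-1 <= (1 - G ^+ Ls k) ^+ k.-1.
      by rewrite ler_piMl.
    move=> h; apply: le_trans h _; apply: le_trans hP _; exact: hP2.
  have hlt : expR (t - c * t ^+ 2) < eps.
    rewrite -[X in _ < X](lnK (x:=eps)) ?posrE // ltr_expR.
    have : 2 * t <= c * t ^+ 2 by rewrite expr2 mulrA; nra.
    lra.
  rewrite sub0r normrN ger0_norm; first exact: le_lt_trans hE hlt.
  by apply: mulr_ge0; [exact: ler0n | exact: mulr_ge0].
Unshelve. all: end_near.
Qed.
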